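(* If projections $e$ and $f$ in a generalized Rickart $*$-ring $R$ are very orthogonal, then $e,f$ are orthogonal (i.e. $ef=0$), $GRP(e)\,GLP(f)=0$, and $eRf=0$.
   Context: A $*$-ring is an associative ring $R$ with an involution $x\mapsto x^*$ (additive, $(xy)^*=y^*x^*$, $x^{**}=x$). A projection is an element $e$ with $e=e^*=e^2$. For $a\in R$, $r(a)=\{b: ab=0\}$. $R$ is a generalized Rickart $*$-ring if for every $x$ there exist $n\ge1$ and a projection $g$ with $r(x^n)=gR$. $GRP(x)=e$ means $e$ is a projection and there is $n\in\mathbb N$ with $x^ne=x^n$ and $x^ny=0\Rightarrow ey=0$ for all $y$; $GLP(x)=f$ means $f$ is a projection and there is $n$ with $fx^n=x^n$ and $yx^n=0\Rightarrow yf=0$ for all $y$. Projections $e,f$ are very orthogonal if there is a central projection $h$ with $he=e$ and $hf=0$. *)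

(* Defs.v *)
From mathcomp Require Import all_boot all_algebra.
Set Implicit Arguments. Unset Strict Implicit. Unset Printing Implicit Defensive.
Import GRing.Theory.
Local Open Scope ring_scope.

Definition is_involution (R : pzRingType) (star : R -> R) : Prop :=
  [/\ forall x y : R, star (x + y) = star x + star y,
      forall x y : R, star (x * y) = star y * star x
    & forall x : R, star (star x) = x].

Definition is_projection (R : pzRingType) (star : R -> R) (e : R) : Prop :=
  e = star e /\ e = e * e.

Definition is_gen_rickart (R : pzRingType) (star : R -> R) : Prop :=
  forall x : R, exists n : nat, exists g : R,
    (0 < n)%N /\ is_projection star g /\
    (forall b : R, x ^+ n * b = 0 <-> exists y : R, b = g * y).

Definition GRP (R : pzRingType) (star : R -> R) (x e : R) : Prop :=
  is_projection star e /\
  exists n : nat, (0 < n)%N /\ x ^+ n * e = x ^+ n /\ (forall y : R, x ^+ n * y = 0 -> e * y = 0).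

Definition GLP (R : pzRingType) (star : R -> R) (x f : R) : Prop :=
  is_projection star f /\
  exists n : nat, (0 < n)%N /\ f * x ^+ n = x ^+ n /\ (forall y : R, y * x ^+ n = 0 -> y * f = 0).

Definition central (R : pzRingType) (h : R) : Prop := forall x : R, h * x = x * h.

Definition very_orthogonal (R : pzRingType) (star : R -> R) (e f : R) : Prop :=
  exists h : R, is_projection star h /\ central h /\ h * e = e /\ h * f = 0.

(* Main.v *)
Require Import Defs.
From mathcomp Require Import all_boot all_algebra.
Local Open Scope ring_scope.
Import GRing.Theory.

Lemma idem_pow (R : pzRingType) (e : R) (n : nat) : e = e * e -> (0 < n)%N -> e ^+ n = e.
Proof.
move=> He; case: n => // n _; elim: n => [|n IH]; first by rewrite expr1.
by rewrite exprS IH -He.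
Qed.

Theorem mainTheorem18 (R : pzRingType) (star : R -> R)
  (Hstar : is_involution star) (Hrick : is_gen_rickart star)
  (e f : R) (He : is_projection star e) (Hf : is_projection star f)
  (Hvo : very_orthogonal star e f) :
  e * f = 0 /\
  (forall g h : R, GRP star e g -> GLP star f h -> g * h = 0) /\
  (forall x : R, e * x * f = 0).
Proof.
case: Hvo => k [_ [Hc [Hke Hkf]]].
have exf : forall x : R, e * x * f = 0.
  by move=> x; rewrite -Hke -(mulrA k) Hc -mulrA Hkf mulr0.
split; first by have := exf 1; rewrite mulr1.
split=> // g h [_ [n [n0 [_ Hg]]]] [_ [m [m0 [_ Hh]]]].
rewrite (@idem_pow _ _ _ He.2 n0) in Hg.
rewrite (@idem_pow _ _ _ Hf.2 m0) in Hh.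
have g1 : g * (1 - k) = 0 by apply: Hg; rewrite mulrBr mulr1 -Hc Hke subrr.
have kh : k * h = 0 by apply: Hh.
have : g = g * k by apply/eqP; rewrite -subr_eq0 -{1}(mulr1 g) -mulrBr g1.
by move=> ->; rewrite -mulrA kh mulr0.
Qed.
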